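(* Let $n\ge1$ and let $\phi,\theta\in S_n$ be $x$--$y$ equivalent. Then the cycle graphs $Gr(\phi)$ and $Gr(\theta)$ have the same number of alternating cycles.
   Context: Permutations are written in one-line notation $\phi=\langle\phi_1\dots\phi_n\rangle$; set $\phi_0=0$. The big black cycle $\phi^{\cdot}$ is the $(n+1)$-cycle on $\{0,\dots,n\}$ with $\phi^{\cdot}(\phi_i)=\phi_{i-1}$ for $1\le i\le n$ and $\phi^{\cdot}(0)=\phi_n$, i.e. $\phi^{\cdot}=(0,\phi_n,\dots,\phi_1)$. Write $a\to b$ when $\phi^{\cdot}(a)=b$. Each $(n+1)$-cycle $(0,c_n,\dots,c_1)$ is the big black cycle of the unique permutation $\langle c_1\dots c_n\rangle$. Cycle graph $Gr(\phi)$: vertices $0,\dots,n$; black edges $a\to\phi^{\cdot}(a)$; grey edges $v\dashrightarrow v+1\pmod{n+1}$. Its edges decompose uniquely into alternating cycles, obtained by following a black edge and then a grey edge. The number of alternating cycles equals the number of cycles, fixed points included, of the map $v\mapsto\phi^{\cdot}(v)+1\pmod{n+1}$. $x$--$y$ exchange operation, for $x,y\in\{0,\dots,n\}$, with $x+1$ read as $0$ when $x=n$: if $x+1\to y$ in $\phi^{\cdot}$, remove $y$ from its place immediately after $x+1$ and reinsert it immediately before $x$. The resulting cycle is $\theta^{\cdot}$. If $y=x$, or if $x+1\to y\to x$ already holds, nothing changes. $x$--$y$ cyclic operation: if $\phi^{\cdot}$ contains $x+1\to y\to x$ (for $x=n$: $0\to y\to n$), relabel the entries of $\phi^{\cdot}$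 to obtain $\theta^{\cdot}$ as follows. If $x<n$ and $y>x+1$, replace $x+1$ by $y-1$ and each $t$ with $x+2\le t\le y-1$ by $t-1$. If $y<x$, replace $x$ by $y+1$ and each $t$ with $y+1\le t\le x-1$ by $t+1$. Two permutations are $x$--$y$ equivalent if they are related by the equivalence relation on $S_n$ generated by all $x$--$y$ exchange operations and all $x$--$y$ cyclic operations, over all $x,y$. Concretely, this means there is a finite sequence of permutations joining them in which each consecutive pair is related, in one direction or the other, by a single such operation. *)

(* Defs.v *)
From Stdlib Require Import Relations.
From mathcomp Require Import all_boot all_fingroup.
Set Implicit Arguments. Unset Strict Implicit. Unset Printing Implicit Defensive.

(* A permutation phi in S_n is represented by p : 'S_n (a permutation of
   'I_n = {0..n-1}); its one-line notation is <phi_1 ... phi_n> with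
   phi_i = (p (i-1)).+1, so that the values range over {1..n}. *)
Definition oneline n (p : 'S_n) : seq nat := [seq (p i).+1 | i <- enum 'I_n].

(* The big black cycle (0, phi_n, ..., phi_1), written as the list of its
   elements in arrow order:  a -> b  iff b follows a cyclically. *)
Definition arrows n (p : 'S_n) : seq nat := 0 :: rev (oneline p).

Definition black n (p : 'S_n) (a : nat) : nat := next (arrows p) a.

Definition succn n (x : nat) : nat := if x == n then 0 else x.+1.

(* x--y exchange operation: x+1 -> y; remove y from its place right after
   x+1 and reinsert it immediately before x.  Cycles are lists up to rotation. *)
Definition exch_op n (phi theta : 'S_n) : Prop :=
  exists (x y : nat) (r1 r2 : seq nat) (k k' : nat),
    x <= n /\
    arrows phi = rot k (succn n x :: y :: r1 ++ x :: r2) /\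
    arrows theta = rot k' (succn n x :: r1 ++ y :: x :: r2).

Definition cyc_relabel n (x y t : nat) : nat :=
  if (x < n) && (x.+1 < y) then
    (if t == x.+1 then y.-1 else if (x.+2 <= t) && (t <= y.-1) then t.-1 else t)
  else if y < x then
    (if t == x then y.+1 else if (y.+1 <= t) && (t <= x.-1) then t.+1 else t)
  else t.

Definition cyc_op n (phi theta : 'S_n) : Prop :=
  exists x y : nat,
    x <= n /\ black phi (succn n x) = y /\ black phi y = x /\
    arrows theta = map (cyc_relabel n x y) (arrows phi).

Definition xy_equiv n : relation 'S_n :=
  clos_refl_sym_trans 'S_n (fun phi theta => exch_op phi theta \/ cyc_op phi theta).

Definition altmap n (p : 'S_n) (v : 'I_n.+1) : 'I_n.+1 :=
  inord ((black p v).+1 %% n.+1).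

(* Number of alternating cycles of Gr(phi) = number of cycles (fixed points
   included) of altmap, i.e. the number of its orbits. *)
Definition n_alt_cycles n (p : 'S_n) : nat :=
  #|[set [set u | fconnect (altmap p) v u] | v : 'I_n.+1]|.

(* Main.v *)
Require Import Defs.
From mathcomp Require Import all_boot all_fingroup.
From mathcomp Require Import zify.
From Stdlib Require Import Lia.
Set Implicit Arguments. Unset Strict Implicit. Unset Printing Implicit Defensive.
Notation sc := Defs.succn.

Section Gen.
Variable T : finType.

Definition cnt (f : T -> T) := #|[set [set u | fconnect f v u] | v : T]|.

Lemma fconP (f : T -> T) x y : reflect (exists i, y = iter i f x) (fconnect f x y).
Proof.
apply: (iffP idP).
  rewrite fconnect_orbit => /trajectP[i _ ->]; by exists i.
by case=> i ->; apply: fconnect_iter.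
Qed.

Lemma cnt_eq f g : f =1 g -> cnt f = cnt g.
Proof.
move=> fg; rewrite /cnt; apply: eq_card => A.
apply/imsetP/imsetP=> -[v _ ->]; exists v => //.
  apply/setP=> u; by rewrite !inE (eq_fconnect fg).
  apply/setP=> u; by rewrite !inE (eq_fconnect fg).
Qed.

Lemma cnt_conj (f g r : T -> T) : injective r -> (forall v, g (r v) = r (f v)) ->
  cnt g = cnt f.
Proof.
move=> ir grf.
have it i v : iter i g (r v) = r (iter i f v).
  by elim: i => //= i ->; rewrite grf.
have O v : [set u | fconnect g (r v) u] = r @: [set u | fconnect f v u].
  apply/setP=> u; rewrite -[u](f_invF ir) mem_imset // !inE.
  apply/fconP/fconP=> -[i Hi]; exists i.
    by apply: (ir); rewrite -it.
  by rewrite it Hi.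
rewrite /cnt -[RHS](card_imset _ (imset_inj ir)); apply: eq_card => A.
apply/imsetP/imsetP.
  case=> w _ ->; exists [set u | fconnect f (invF ir w) u].
    by apply/imsetP; exists (invF ir w).
  by rewrite -O f_invF.
case=> B /imsetP[v _ ->] ->; exists (r v) => //; by rewrite O.
Qed.

Lemma cnt_perm (s : {perm T}) : cnt s = #|porbits s|.
Proof.
rewrite /cnt /porbits; apply: eq_card => A.
have E v : [set u | fconnect s v u] = porbit s v.
  apply/setP=> u; rewrite inE; apply/fconP/porbitP=> -[i ->]; exists i;
  by rewrite permX.
apply/imsetP/imsetP=> -[v _ ->]; exists v => //; by rewrite E.
Qed.

Definition tau3 (S : eqType) (a b c : S) v :=
  if v == a then b else if v == b then c else if v == c then a else v.

Lemma porbit_fix (s : {perm T}) a b : s a = a -> b != a -> (a \notin porbit s b).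
Proof.
move=> sa ba; rewrite porbit_sym; apply/porbitP=> -[i E].
have : iter i s a = a by elim: i {E} => //= i ->.
rewrite -permX -E => H; by rewrite H eqxx in ba.
Qed.

Lemma cnt_3 (f : T -> T) a b c : injective f -> a != b -> b != c -> a != c -> f c = a ->
  cnt (fun v => f (tau3 a b c v)) = cnt f.
Proof.
move=> injf ab bc ac fca.
pose s := perm injf.
pose s1 := (tperm a c * s)%g.
pose s2 := (tperm a b * s1)%g.
have e2 : (fun v => f (tau3 a b c v)) =1 s2.
  move=> v; rewrite /s2 /s1 !permM permE /tau3.
  case: (tpermP a b v) => [->|->|va vb]; rewrite ?eqxx.
  - by rewrite tpermD // eq_sym.
  - by rewrite eq_sym (negbTE ab) tpermL.
  have va' : (v == a) = false by apply/eqP.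
  have vb' : (v == b) = false by apply/eqP.
  rewrite va' vb'.
  case: eqP => [->|/eqP vc]; first by rewrite tpermR.
  by rewrite tpermD // eq_sym ?va' //; apply/eqP.
have h1 := porbits_mul_tperm s a c.
have h2 := porbits_mul_tperm s1 a b.
have : a \in porbit s c.
  by rewrite -eq_porbit_mem -fca -(permE injf) -/s -[s c]/((s ^+ 1)%g c) porbit_perm eqxx.
move=> ain; rewrite ain /= ac addn0 addn1 in h1.
have s1a : s1 a = a by rewrite /s1 permM tpermL permE.
rewrite (porbit_fix s1a) ?(eq_sym b) // ab /= in h2.
rewrite (cnt_eq e2) (cnt_eq (f:=f) (g:=s)) ?cnt_perm; last by move=> v; rewrite permE.
rewrite -/s1 in h1; rewrite -/s2 in h2; move: h1 h2; rewrite -[1.*2]/2. move=> E1 E2; apply/eqP; rewrite -(eqn_add2r 2) E2 E1 addn1 addn2 //.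
Qed.

End Gen.


Ltac split_ifs := repeat match goal with |- context [if ?b then _ else _] =>
  (lazymatch b with context[if _ then _ else _] => fail | _ => idtac end);
  let H := fresh "H" in destruct b eqn:H; [ | move/negbT: H => H] end.
Ltac arith := try rewrite /cyc_relabel; try rewrite /Defs.succn; try rewrite /tau3;
  split_ifs; lia.

Lemma rho_inj1 n x y : x < n -> x + 3 <= y -> injective (cyc_relabel n x y).
Proof. move=> H1 H2 u v; arith. Qed.
Lemma rho_inj2 n x y : x <= n -> y + 2 <= x -> injective (cyc_relabel n x y).
Proof. move=> H1 H2 u v; arith. Qed.
Lemma rho_le n x y w : x <= n -> y <= n -> w <= n -> cyc_relabel n x y w <= n.
Proof. move=> *; arith. Qed.
Lemma rho_id n x y : x <= n -> ~~ ((x < n) && (x + 3 <= y)) -> ~~ (y + 2 <= x) ->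
  forall t, cyc_relabel n x y t = t.
Proof. move=> H1 H2 H3 t; move: H2 H3; arith. Qed.
Lemma rho_id1 n x y w : x < n -> x + 3 <= y -> y <= n -> w <= n ->
  sc n (cyc_relabel n x y w) = cyc_relabel n x y (tau3 x.+1 x.+2 y (sc n w)).
Proof. move=> *; arith. Qed.
Lemma rho_id2 n x y w : x <= n -> y + 2 <= x -> w <= n ->
  sc n (cyc_relabel n x y w) = cyc_relabel n x y (tau3 y.+1 x (sc n x) (sc n w)).
Proof. move=> *; arith. Qed.

Lemma tau3K (S : eqType) (a b c : S) : a != b -> b != c -> a != c ->
  cancel (tau3 a b c) (tau3 b a c).
Proof.
move=> ab bc ac v.
have ba : b != a by rewrite eq_sym. have cb : c != b by rewrite eq_sym.
have ca : c != a by rewrite eq_sym.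
rewrite /tau3.
have [->|va] := eqVneq v a; last have [->|vb] := eqVneq v b;
  last have [->|vc] := eqVneq v c;
  by do 6!rewrite ?eqxx ?(negbTE ab, negbTE ba, negbTE bc, negbTE cb, negbTE ac, negbTE ca) /=;
  do 3!rewrite ?(negbTE va, negbTE vb, negbTE vc) /=.
Qed.

Lemma tau3_le (a b c v n : nat) : a <= n -> b <= n -> c <= n -> v <= n -> tau3 a b c v <= n.
Proof. by rewrite /tau3 => *; do !case: ifP. Qed.

Lemma next_split (s p t : seq nat) v : uniq s -> s = p ++ v :: t ->
  next s v = head v (t ++ p).
Proof.
move=> Us E; rewrite -(next_rot (size p) Us) E rot_size_cat /=.
by case: (t ++ p) => [|z w] /=; rewrite eqxx.
Qed.

Section Arr.
Variable n : nat.
Implicit Types p : 'S_n.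

Lemma arrows_uniq p : uniq (arrows p).
Proof.
rewrite /arrows /= rev_uniq mem_rev /oneline; apply/andP; split.
  by apply/negP=> /mapP[i _].
by rewrite map_inj_uniq ?enum_uniq // => i j [] /ord_inj /perm_inj.
Qed.

Lemma mem_arrows p v : (v \in arrows p) = (v <= n).
Proof.
rewrite /arrows inE mem_rev /oneline; case: v => [|v] //=.
apply/mapP/idP=> [[i _ [->]]|H]; first exact: ltn_ord.
exists ((p^-1)%g (Ordinal H)); first by rewrite mem_enum.
by rewrite permKV.
Qed.

Lemma black_le p v : v <= n -> black p v <= n.
Proof. by rewrite -!(mem_arrows p) /black mem_next. Qed.

Lemma black_inj p : injective (black p).
Proof. exact: can_inj (prev_next (arrows_uniq p)). Qed.

Definition liftf (h : nat -> nat) (v : 'I_n.+1) : 'I_n.+1 := inord (h v).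

Lemma val_liftf (h : nat -> nat) (v : 'I_n.+1) : h v <= n -> (liftf h v : nat) = h v.
Proof. by move=> H; rewrite /liftf inordK. Qed.

Lemma altmapE p v : altmap p v = liftf (fun w => sc n (black p w)) v.
Proof.
rewrite /altmap /liftf; congr inord.
have := black_le p (ltn_ord v); rewrite /Defs.succn.
case: eqP => [->|ne le]; first by rewrite modnn.
by rewrite modn_small //; lia.
Qed.

Lemma val_altmap p v : (altmap p v : nat) = sc n (black p v).
Proof.
rewrite altmapE val_liftf //.
have := black_le p (ltn_ord v); rewrite /Defs.succn; case: eqP => //; lia.
Qed.

Lemma sc_inj a b : a <= n -> b <= n -> sc n a = sc n b -> a = b.
Proof. rewrite /Defs.succn => Ha Hb; do !case: eqP => //; lia. Qed.

Lemma altmap_inj p : injective (altmap p).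
Proof.
move=> u v E; have := congr1 (@nat_of_ord _) E; rewrite !val_altmap => /sc_inj.
have lo (w : 'I_n.+1) : val w <= n by rewrite -ltnS ltn_ord.
move=> H; apply: val_inj; apply: (black_inj (p:=p)); apply: H; apply: black_le; exact: lo.
Qed.

Lemma liftf_tau3 (a b c : nat) : a <= n -> b <= n -> c <= n ->
  forall v, liftf (tau3 a b c) v = tau3 (inord a) (inord b) (inord c) v.
Proof.
move=> Ha Hb Hc v.
have E z : z <= n -> (v == inord z :> 'I_n.+1) = (val v == z).
  by move=> Hz; rewrite -val_eqE /= inordK.
rewrite /liftf /tau3 !E //.
do !case: ifP => _ //; exact: inord_val.
Qed.

Lemma inord_neq (a b : nat) : a <= n -> b <= n -> a != b -> (inord a : 'I_n.+1) != inord b.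
Proof. by move=> Ha Hb; rewrite -val_eqE /= !inordK. Qed.

Lemma step3 p (a b c : nat) : a <= n -> b <= n -> c <= n ->
  a != b -> b != c -> a != c -> sc n (black p c) = a ->
  cnt (fun v => altmap p (liftf (tau3 a b c) v)) = cnt (altmap p).
Proof.
move=> Ha Hb Hc ab bc ac E.
rewrite (cnt_eq (g := fun v => altmap p (tau3 (inord a) (inord b) (inord c) v))); last first.
  by move=> v; rewrite liftf_tau3.
apply: cnt_3; [exact: altmap_inj | exact: inord_neq | exact: inord_neq | exact: inord_neq|].
apply: ord_inj; rewrite val_altmap /= !inordK //; lia.
Qed.

End Arr.

Lemma exch_next (X y x c : nat) q r2 : uniq (X :: y :: rcons q c ++ x :: r2) ->
  forall v, next (X :: rcons q c ++ y :: x :: r2) v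
          = next (X :: y :: rcons q c ++ x :: r2) (tau3 X y c v).
Proof.
move=> U1 v.
have P : perm_eq (X :: y :: rcons q c ++ x :: r2) (X :: rcons q c ++ y :: x :: r2).
  by rewrite perm_cons; apply/permPl; exact: (perm_catCA [:: y]).
have U2 : uniq (X :: rcons q c ++ y :: x :: r2) by rewrite -(perm_uniq P).
have [->|nX] := eqVneq v X.
  rewrite /tau3 eqxx.
  rewrite (next_split (p:=[::]) (t:=rcons q c ++ y :: x :: r2) U2) //.
  rewrite (next_split (p:=[:: X]) (t:=rcons q c ++ x :: r2) U1) //.
  by case: q {U1 U2 P}.
have [Ev|ny] := eqVneq v y.
  subst v.
  rewrite /tau3 (negbTE nX) eqxx.
  rewrite (next_split (p:=X :: rcons q c) (t:=x :: r2) U2) //.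
  by rewrite (next_split (p:=[:: X, y & q]) (t:=x :: r2) U1) //= cat_rcons.
have [Ev|nc] := eqVneq v c.
  subst v.
  rewrite /tau3 (negbTE nX) (negbTE ny) eqxx.
  rewrite (next_split (p:=X :: q) (t:=[:: y, x & r2]) U2) /=; last by rewrite cat_rcons.
  by rewrite eqxx.
rewrite /tau3 (negbTE nX) (negbTE ny) (negbTE nc).
case Hv: (v \in X :: y :: rcons q c ++ x :: r2); last first.
  by rewrite !next_nth -(perm_mem P) Hv.
rewrite !inE mem_cat mem_rcons !inE (negbTE nX) (negbTE ny) (negbTE nc) /= in Hv.
case/orP: Hv => [vq | /orP[/eqP vx | vr]].
- case/splitPr: vq U1 U2 P => q1 q2 U1 U2 P.
  rewrite (next_split (p:=X :: q1) (t:=rcons q2 c ++ y :: x :: r2) U2); last first.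
    by rewrite /= rcons_cat /= -catA.
  rewrite (next_split (p:=[:: X, y & q1]) (t:=rcons q2 c ++ x :: r2) U1); last first.
    by rewrite /= rcons_cat /= -catA.
  by case: q2 {U1 U2 P}.
- subst v.
  rewrite (next_split (p:=X :: rcons q c ++ [:: y]) (t:=r2) U2); last first.
    by rewrite /= -catA.
  rewrite (next_split (p:=[:: X, y & rcons q c]) (t:=r2) U1) //.
  by case: r2 {U1 U2 P}.
- case/splitPr: vr U1 U2 P => r21 r22 U1 U2 P.
  rewrite (next_split (p:=X :: rcons q c ++ [:: y, x & r21]) (t:=r22) U2); last first.
    by rewrite /= -catA.
  rewrite (next_split (p:=[:: X, y & rcons q c ++ x :: r21]) (t:=r22) U1); last first.
    by rewrite /= -catA.
  by case: r22 {U1 U2 P}.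
Qed.

Section Ops.
Variable n : nat.
Implicit Types p : 'S_n.

Lemma lo (w : 'I_n.+1) : (w : nat) <= n.
Proof. by rewrite -ltnS ltn_ord. Qed.

Lemma sc_le x : x <= n -> sc n x <= n.
Proof. rewrite /Defs.succn; case: eqP; lia. Qed.

Lemma exch_cnt (phi theta : 'S_n) : exch_op phi theta -> cnt (altmap theta) = cnt (altmap phi).
Proof.
case=> x [y] [r1] [r2] [k] [k'] [xn [E1 E2]].
set X := Defs.succn n x in E1 E2.
have U1 : uniq (X :: y :: r1 ++ x :: r2) by rewrite -(rot_uniq k) -E1 arrows_uniq.
have U2 : uniq (X :: r1 ++ y :: x :: r2) by rewrite -(rot_uniq k') -E2 arrows_uniq.
have B1 v : black phi v = next (X :: y :: r1 ++ x :: r2) v by rewrite /black E1 next_rot.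
have B2 v : black theta v = next (X :: r1 ++ y :: x :: r2) v by rewrite /black E2 next_rot.
have M v : v \in X :: y :: r1 ++ x :: r2 -> v <= n by rewrite -(mem_arrows phi) E1 mem_rot.
case: r1 E1 E2 U1 U2 B1 B2 M => [|b r1'] E1 E2 U1 U2 B1 B2 M.
  by apply: cnt_eq => v; apply: ord_inj; rewrite !val_altmap B1 B2.
rewrite (lastI b r1') in U1 U2 B1 B2 M.
set c := last b r1' in U1 U2 B1 B2 M; set q := belast b r1' in U1 U2 B1 B2 M.
have Xn : X <= n by apply: M; rewrite inE eqxx.
have yn : y <= n by apply: M; rewrite !inE eqxx orbT.
have cn : c <= n by apply: M; rewrite !inE mem_cat mem_rcons !inE eqxx !orbT.
have := U1; rewrite /= !inE !mem_cat !inE mem_rcons !inE => /andP[H1 /andP[H2 _]].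
have Xy : X != y by apply: contraNneq H1 => ->; rewrite eqxx.
have Xc : X != c by apply: contraNneq H1 => ->; rewrite eqxx !orbT.
have yc : y != c by apply: contraNneq H2 => ->; rewrite mem_rcons inE eqxx.
rewrite (cnt_eq (g := fun v => altmap phi (liftf (tau3 X y c) v))); last first.
  move=> v; apply: ord_inj; rewrite !val_altmap val_liftf ?tau3_le ?lo //.
  by rewrite B1 B2 exch_next.
apply: step3 => //.
rewrite B1 (next_split (p:=[:: X, y & q]) (t:=x :: r2) U1) //=.
by rewrite cat_rcons.
Qed.

Lemma cyc_gen (phi theta : 'S_n) (rho : nat -> nat) (a b c : nat) :
  injective rho -> (forall w, w <= n -> rho w <= n) ->
  arrows theta = map rho (arrows phi) ->
  a <= n -> b <= n -> c <= n -> a != b -> b != c -> a != c ->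
  (forall w, w <= n -> sc n (rho w) = rho (tau3 a b c (sc n w))) ->
  sc n (black phi c) = a -> cnt (altmap theta) = cnt (altmap phi).
Proof.
move=> ir rn E an bn cn ab bc ac H Hc.
have Bt w : black theta (rho w) = rho (black phi w).
  by rewrite /black E next_map // arrows_uniq.
rewrite -(step3 an bn cn ab bc ac Hc).
transitivity (cnt (fun v => liftf (tau3 a b c) (altmap phi v))).
  apply: (cnt_conj (r := liftf rho)).
    move=> u v E'; have := congr1 (@nat_of_ord _) E'.
    rewrite !val_liftf ?rn ?lo // => /ir; exact: ord_inj.
  move=> v; apply: ord_inj.
  rewrite val_altmap !val_liftf ?rn ?lo ?tau3_le ?lo ?sc_le ?black_le ?lo // Bt.
  by rewrite val_altmap H // black_le // lo.
apply: (cnt_conj (r := liftf (tau3 a b c))) => //.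
move=> u v E'; have := congr1 (@nat_of_ord _) E'.
rewrite !val_liftf ?tau3_le ?lo // => /(can_inj (tau3K ab bc ac)); exact: ord_inj.
Qed.

Lemma cyc_cnt (phi theta : 'S_n) : cyc_op phi theta -> cnt (altmap theta) = cnt (altmap phi).
Proof.
case=> x [y] [xn [Hy [Hx E]]].
have yn : y <= n by rewrite -Hy; apply: black_le; apply: sc_le.
have [C1|C1] := boolP ((x < n) && (x + 3 <= y)).
  case/andP: C1 => C1 C2.
  have scx : sc n x = x.+1 by rewrite /Defs.succn; case: eqP => //; lia.
  apply: (cyc_gen (rho := cyc_relabel n x y) (a := x.+1) (b := x.+2) (c := y)).
  - exact: rho_inj1.
  - by move=> w wn; apply: rho_le.
  - exact: E.
  all: try (by apply/eqP; lia); try lia.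
  - by move=> w wn; apply: rho_id1.
  by rewrite Hx.
have [C2|C2] := boolP (y + 2 <= x).
  have scy : sc n y = y.+1 by rewrite /Defs.succn; case: eqP => //; lia.
  apply: (cyc_gen (rho := cyc_relabel n x y) (a := y.+1) (b := x) (c := sc n x)).
  - exact: rho_inj2.
  - by move=> w wn; apply: rho_le.
  - exact: E.
  all: try (by apply/eqP; rewrite /Defs.succn; case: eqP; lia); try (rewrite /Defs.succn; case: eqP; lia). all: try lia.
  - by move=> w wn; apply: rho_id2.
  by rewrite Hy.
apply: cnt_eq => v; apply: ord_inj; rewrite !val_altmap /black E.
by rewrite (eq_map (rho_id xn C1 C2)) map_id.
Qed.

End Ops.

Theorem mainTheorem3 (n : nat) (phi theta : 'S_n) :
  1 <= n -> xy_equiv phi theta -> n_alt_cycles phi = n_alt_cycles theta.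
Proof.
move=> _; elim=> [p q [H|H]|p|p q _ IH|p q r _ IH1 _ IH2] //.
- by rewrite /n_alt_cycles -/(cnt _) -/(cnt _) (exch_cnt H).
- by rewrite /n_alt_cycles -/(cnt _) -/(cnt _) (cyc_cnt H).
- by rewrite IH1 IH2.
Qed.
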